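(* Let $X$ and $Y$ be metric spaces and let $A(X)\subseteq C(X)$ and $A(Y)\subseteq C(Y)$ be adequate subspaces. Assume that either (a) $A(Y)=A^{\mathrm{loc}}(Y)$ or $A(Y)=A^{\mathrm{loc}}_b(Y)$, or (b) $Y$ is complete and for every separated sequence $(y_n)$ in $Y$ there exists $g\in A(Y)$ with $g(y_{2n})=1$ and $g(y_{2n-1})=0$ for all $n$. If $h:\mathcal{A}X\to\mathcal{A}Y$ is a homeomorphism and $x_0\in X$, then $h(x_0)\in Y$.
   Context: All functions are real-valued. $A(X)\subseteq C(X)$ separates points from closed sets if for every $x\in X$ and closed $F\not\ni x$ there is $f\in A(X)$ with $f(x)=1$, $f=0$ on $F$. $A(X)$ is adequate if (a) it separates points from closed sets and contains the constants; (b) there is a continuous nondecreasing $g:\mathbb{R}\to\mathbb{R}$ with $g(t)=0$ for $t\le0$, $g(t)=1$ for $t\ge1$, and $g\circ f\in A(X)$ for all $f\in A(X)$; (c) every $f\in A(X)$ is a difference of two nonnegative elements of $A(X)$. $A^{\mathrm{loc}}(Y)$ is the space of real functions $f$ on $Y$ such that every $y_0\in Y$ has a neighborhood $U$ and some $g\in A(Y)$ with $f=g$ on $U$; $A^{\mathrm{loc}}_b(Y)$ is its subspace of bounded functions. A sequence (set of points) in a metric space is separated if there is $\varepsilon>0$ with $d(y,y')\ge\varepsilon$ for any two distinct points $y,y'$ of it. The $A(X)$-compactification $\mathcal{A}X$ is the closure of $i(X)$ in $[-\infty,\infty]^{A(X)}$ (product of order topologies), $i(x)(\varphi)=\varphi(x)$,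 with $X$ identified with $i(X)$; $\mathcal{A}Y$ is defined analogously. *)

(* Defs.v *)
From HB Require Import structures.
From mathcomp Require Import all_boot all_order all_algebra.
From mathcomp Require Import all_classical all_reals all_analysis.
Set Implicit Arguments. Unset Strict Implicit. Unset Printing Implicit Defensive.
Import Order.TTheory GRing.Theory Num.Theory numFieldTopology.Exports numFieldNormedType.Exports.
Local Open Scope classical_set_scope.
Local Open Scope ring_scope.

Section Adequate.
Context {R : realType} {X : topologicalType}.

Definition subspace_of_C (A : set (X -> R)) : Prop :=
  (forall f, A f -> continuous f) /\
  A (fun _ => 0) /\
  (forall f g, A f -> A g -> A (f \+ g)) /\
  (forall (c : R) f, A f -> A (fun x => c * f x)).

Definition separates_points_from_closed_sets (A : set (X -> R)) : Prop :=
  forall (x : X) (F : set X), closed F -> ~ F x ->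
    exists f, A f /\ f x = 1 /\ (forall z, F z -> f z = 0).

Definition adequate (A : set (X -> R)) : Prop :=
  (separates_points_from_closed_sets A /\ (forall c : R, A (fun _ => c))) /\
  (exists g : R -> R, continuous g /\ {homo g : s t / s <= t} /\
     (forall t, t <= 0 -> g t = 0) /\ (forall t, 1 <= t -> g t = 1) /\
     (forall f, A f -> A (g \o f))) /\
  (forall f, A f -> exists f1 f2, A f1 /\ A f2 /\
     (forall x, 0 <= f1 x) /\ (forall x, 0 <= f2 x) /\ f = f1 \- f2).

Definition Aloc (A : set (X -> R)) : set (X -> R) :=
  [set f | forall y0 : X, exists U, nbhs y0 U /\
     exists g, A g /\ (forall y, U y -> f y = g y)].

Definition Aloc_b (A : set (X -> R)) : set (X -> R) :=
  [set f | Aloc A f /\ exists M : R, forall y, `|f y| <= M].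

End Adequate.

(* The A(X)-compactification: closure of i(X) in [-oo,+oo]^{A(X)}
   (product of order topologies on \bar R). *)
Definition idx {R : realType} {X : Type} (A : set (X -> R)) := {f : X -> R | A f}.

Definition cembed {R : realType} {X : Type} (A : set (X -> R)) (x : X)
  : {ptws idx A -> \bar R} := fun f => ((proj1_sig f) x)%:E.

Arguments cembed {R X} A x.

Definition compactif {R : realType} {X : Type} (A : set (X -> R))
  : set {ptws idx A -> \bar R} := @closure {ptws idx A -> \bar R} (range (cembed A)).

Definition homeomorphism_on {T U : topologicalType} (S : set T) (S' : set U)
  (h : T -> U) : Prop :=
  set_fun S S' h /\
  exists k : U -> T, set_fun S' S k /\
    (forall t, S t -> k (h t) = t) /\ (forall u, S' u -> h (k u) = u) /\
    {within S, continuous h} /\ {within S', continuous k}.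

Definition separated_seq {R : realType} {Y : metricType R} (y : nat -> Y) : Prop :=
  exists2 e : R, 0 < e & forall n m, n <> m -> e <= mdist (y n) (y m).

Definition complete_metric {R : realType} (Y : metricType R) : Prop :=
  forall u : nat -> Y, cauchy_ball (u @ \oo) -> exists l : Y, u @ \oo --> l.

Arguments compactif {R X} A.
Arguments homeomorphism_on {T U} S S' h.

(* Main.v *)
Require Import Defs.
From HB Require Import structures.
From mathcomp Require Import all_boot all_order all_algebra.
From mathcomp Require Import all_classical all_reals all_analysis.
From mathcomp Require Import lra.
Import Order.TTheory GRing.Theory Num.Theory numFieldTopology.Exports numFieldNormedType.Exports.
Local Open Scope classical_set_scope.
Local Open Scope ring_scope.


Lemma subseq_cvg (T : topologicalType) (u : nat -> T) (l : T) (s : nat -> nat) :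
  (forall n, (n <= s n)%N) -> u @ \oo --> l -> (u \o s) @ \oo --> l.
Proof.
move=> hs hu W /hu [N _ HN]; exists N => // n /= Nn.
by apply: HN; exact: leq_trans Nn (hs n).
Qed.

Lemma mball_open (R : realType) (Y : metricType R) (x : Y) (r : R) : open (ball x r).
Proof.
rewrite openE => y; rewrite ballEmdist /= => hy.
apply/nbhs_ballP; exists (r - mdist x y); first by rewrite /=; lra.
move=> z /=; rewrite ballEmdist /= => hz.
have := metric_triangle x y z; lra.
Qed.

Section greedy.
Variables (pick : nat -> nat) (B : nat -> nat).
Fixpoint gst (k : nat) : nat * nat :=
  match k with
  | 0 => (pick 0, B (pick 0))
  | S k => let b := pick (maxn (gst k).1.+1 (gst k).2) in (b, maxn (gst k).2 (B b))
  end.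
End greedy.

Lemma greedy (P : nat -> Prop) (Pinf : forall N, exists n, (N <= n)%N /\ P n)
  (B : nat -> nat) : exists phi : nat -> nat, (forall k, P (phi k)) /\
   (forall k, (phi k < phi k.+1)%N) /\ (forall j k, (j < k)%N -> (B (phi j) <= phi k)%N).
Proof.
have [pick hpick] := choice Pinf.
pose phi k := (gst pick B k).1.
pose M k := (gst pick B k).2.
have hM : forall k j, (j <= k)%N -> (B (phi j) <= M k)%N.
  elim=> [|k IH] j.
    by rewrite leqn0 => /eqP ->.
  rewrite leq_eqVlt => /orP [/eqP ->|]; first by rewrite /M /phi /= leq_maxr.
  rewrite ltnS => /IH H; rewrite /M /=; exact: leq_trans H (leq_maxl _ _).
have hphi : forall k, (maxn (phi k).+1 (M k) <= phi k.+1)%N.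
  by move=> k; exact: (hpick _).1.
exists phi; split; [|split].
- by case=> [|k]; exact: (hpick _).2.
- by move=> k; have := hphi k; rewrite geq_max => /andP[].
- move=> j [//|k] jk; have := hphi k; rewrite geq_max => /andP[_ h].
  exact: leq_trans (hM k j jk) h.
Qed.
Lemma ptws_cvgP (I : Type) (T : topologicalType) (F : set_system {ptws I -> T})
  (FF : Filter F) (f : {ptws I -> T}) :
  F --> f <-> forall i, (fun g : {ptws I -> T} => g i) @ F --> f i.
Proof.
have surj i : [set (g : {ptws I -> T}) i | g in [set: {ptws I -> T}]] = [set: T].
  by rewrite eqEsubset; split=> v // _; exists (fun _ => v).
split.
- move=> /cvg_sup H i; have /cvg_image := H i.
  move=> /(_ (surj i)) H2 W /H2 [A FA AW]. rewrite nbhs_simpl /=.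
  by apply: filterS FA => g Ag; rewrite -AW; exists g.
- move=> H; apply/cvg_sup => i; apply/cvg_image; first exact: surj.
  move=> W /H; rewrite nbhs_simpl => FW; exists ((fun g : {ptws I -> T} => g i) @^-1` W) => //.
  by rewrite image_preimage // surj.
Qed.

Lemma proj_cont (I : Type) (T : topologicalType) (i : I) :
  continuous (fun p : {ptws I -> T} => p i).
Proof.
move=> p; have : nbhs p --> p by [].
by move/(@ptws_cvgP _ _ _ _ p) => /(_ i).
Qed.

Definition FC {T : topologicalType} (S : set T) (p : T) :=
  exists V : nat -> set T, (forall n, nbhs p (V n)) /\
    (forall U, nbhs p U -> exists n, forall z, S z -> V n z -> U z).

Lemma FC_homeo {T U : topologicalType} (S : set T) (S' : set U) h p :
  homeomorphism_on S S' h -> S p -> FC S p -> FC S' (h p).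
Proof.
move=> [hS [k [kS [kh [hk [hc kc]]]]]] Sp [V [Vn VU]].
have hc' := (proj1 (subspace_continuousP _ _) hc).
have kc' := (proj1 (subspace_continuousP _ _) kc).
have S'hp : S' (h p) by apply: hS.
exists (fun n z => S' z -> V n (k z)); split.
  move=> n; have := kc' _ S'hp (V n); rewrite /from_subspace kh //.
  by move=> /(_ (Vn n)).
move=> W /(hc' _ Sp) => /VU [n Hn]; exists n => z S'z Vz.
have Skz : S (k z) by apply: kS.
by have := Hn _ Skz (Vz S'z) Skz; rewrite /preimage /from_subspace /= hk.
Qed.
Lemma archi_inv (R : realType) (d : R) : 0 < d -> exists N : nat, N.+1%:R^-1 < d.
Proof.
move=> d0; exists (Num.bound d^-1).
have h : d^-1 < (Num.bound d^-1)%:R by apply: archi_boundP; rewrite invr_ge0 ltW.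
rewrite -[X in _ < X]invrK ltf_pV2 ?posrE ?invr_gt0 ?ltr0n //.
by apply: lt_trans h _; rewrite ltr_nat.
Qed.

Lemma FC_X (R : realType) (X : metricType R) (AX : set (X -> R)) :
  subspace_of_C AX -> separates_points_from_closed_sets AX ->
  forall x0, FC (compactif AX) (cembed AX x0).
Proof.
move=> [Acont _] sep x0.
have hphi : forall n : nat, exists phi : idx AX, proj1_sig phi x0 = 1 /\
    forall z, ~ ball x0 (n.+1%:R^-1) z -> proj1_sig phi z = 0.
  move=> n.
  have cl : closed (~` ball x0 (n.+1%:R^-1)) by rewrite closedC; exact: mball_open.
  have nx : ~ (~` ball x0 (n.+1%:R^-1)) x0.
    by move=> /= nb; apply: nb; apply: ballxx; rewrite invr_gt0 ltr0n.
  have [f [Af [fx0 fF]]] := sep x0 _ cl nx.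
  by exists (exist _ f Af).
have [phi Hphi] := choice hphi.
set e0 := cembed AX x0.
pose V n := [set p : {ptws idx AX -> \bar R} | (2^-1)%:E < p (phi n)]%E.
have Vopen n : open (V n).
  have h := proj1 (continuousP _) (proj_cont _ (\bar R) (phi n)) _ (@open_ereal_gt_ereal _ ((2^-1)%:E)).
  exact h.
exists V; split.
  move=> n; apply: open_nbhs_nbhs; split => //.
  by rewrite /V /= /e0 /cembed (Hphi n).1 lte_fin; lra.
move=> U Ue; apply: contrapT => H.
have hp : forall n, exists p, compactif AX p /\ V n p /\ ~ U p.
  move=> n; apply: contrapT => H2; apply: H; exists n => z Kz Vz.
  by apply: contrapT => nU; apply: H2; exists z.
have [p Hp] := choice hp.
suff : p @ \oo --> e0.
  by move=> /(_ _ Ue) [N _ HN]; have := (Hp N).2.2; apply; apply: HN => /=.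
apply/ptws_cvgP => psi.
set a := proj1_sig psi x0.
move=> W; rewrite nbhs_simpl /= => /nbhs_EFin /nbhs_ballP [eps eps0 Heps].
have : nbhs x0 (proj1_sig psi @^-1` ball a (eps / 2)).
  by apply: (Acont _ (proj2_sig psi)); apply: nbhsx_ballx; rewrite divr_gt0.
move=> /nbhs_ballP [del del0 Hdel].
have [N HN] := @archi_inv _ _ del0.
exists N => // n /= Nn.
pose C := [set e : \bar R | ((a - eps / 2)%:E <= e)%E] `&` [set e | (e <= (a + eps / 2)%:E)%E].
suff Cp : C (p n psi).
  move: Cp; rewrite /C /=; case: (p n psi) => [r| |] /=; rewrite ?lee_fin => -[h1 h2] //.
  apply: Heps; rewrite -ball_normE /=.
  have : `|a - r| <= eps / 2 by rewrite ler_distlC h1 h2.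
  rewrite /a; move: eps0 => /= ? ?; lra.
apply: contrapT => nC.
have Oopen : open (V n `&` [set p' : {ptws idx AX -> \bar R} | ~ C (p' psi)]).
  apply: openI => //.
  apply: (proj1 (continuousP _) (proj_cont _ (\bar R) psi) (~` C)).
  by rewrite openC; apply: closedI; [exact: closed_ereal_le_ereal| exact: closed_ereal_ge_ereal].
have := (Hp n).1 _ (open_nbhs_nbhs (conj Oopen (conj (Hp n).2.1 nC))).
move=> [_ [[x _ <-] [Vx nCx]]].
apply: nCx.
have bx : ball x0 (n.+1%:R^-1) x.
  apply: contrapT => nb; move: Vx; rewrite /V /= /cembed ((Hphi n).2 x nb) lte_fin; lra.
have : ball x0 del x.
  apply: le_ball bx; apply: ltW; apply: le_lt_trans HN.
  by rewrite lef_pV2 ?posrE // ler_nat.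
move=> /Hdel; rewrite /= -ball_normE /= => h.
have : `|a - proj1_sig psi x| <= eps / 2 by apply: ltW.
by rewrite ler_distlC /C /cembed /= !lee_fin => /andP[].
Qed.



Lemma Y_seq (R : realType) (Y : metricType R) (AY : set (Y -> R))
  (q : {ptws idx AY -> \bar R}) :
  compactif AY q -> FC (compactif AY) q ->
  exists y : nat -> Y, forall s : nat -> nat, (forall n, (n <= s n)%N) ->
    forall psi : idx AY, (fun n => (proj1_sig psi (y (s n)))%:E) @ \oo --> q psi.
Proof.
move=> Lq [V [Vn VU]].
pose W n := fun z => forall j, (j <= n)%N -> V j z.
have Wn : forall n, nbhs q (W n).
  elim=> [|n IH].
    by apply: filterS (Vn 0%N) => z Vz j; rewrite leqn0 => /eqP ->.
  apply: filterS (filterI IH (Vn n.+1)) => z [Wz Vz] j.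
  by rewrite leq_eqVlt => /orP[/eqP->//|]; rewrite ltnS; exact: Wz.
have hy : forall n, exists y, W n (cembed AY y).
  by move=> n; have [_ [[y _ <-] Wy]] := Lq _ (Wn n); exists y.
have [y Hy] := choice hy.
exists y => s hs psi.
have cv : (fun n => cembed AY (y (s n))) @ \oo --> q.
  move=> U /VU [m Hm]; exists m => // n /= mn.
  apply: Hm; first by apply: subset_closure; exists (y (s n)).
  by apply: Hy; exact: leq_trans mn (hs n).
by move/ptws_cvgP : cv => /(_ psi).
Qed.

Lemma star (R : realType) (Y : metricType R) (AY : set (Y -> R))
  (q : {ptws idx AY -> \bar R}) (y : nat -> Y) :
  (forall f, AY f -> continuous f) ->
  ~ range (cembed AY) q ->
  (forall psi : idx AY, (fun n => (proj1_sig psi (y n))%:E) @ \oo --> q psi) ->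
  forall c, exists2 r : R, 0 < r & exists N, forall n, (N <= n)%N -> r <= mdist c (y n).
Proof.
move=> Acont nq cv c.
have [psi hpsi] : exists psi, q psi <> (proj1_sig psi c)%:E.
  apply: contrapT => H; apply: nq; exists c => //.
  apply: functional_extensionality_dep => psi; apply: contrapT => H2.
  by apply: H; exists psi => H3; apply: H2; rewrite H3.
have ncl : ~ cluster (nbhs (q psi)) ((proj1_sig psi c)%:E).
  by move/ereal_hausdorff.
have [A [B [nA [nB AB]]]] : exists A B, nbhs (q psi) A /\ nbhs ((proj1_sig psi c)%:E) B /\
    forall e, A e -> B e -> False.
  apply: contrapT => H; apply: ncl => A B nA nB.
  apply: contrapT => H2; apply: H; exists A, B; split => //; split => // e Ae Be.
  by apply: H2; exists e.
have : nbhs c (proj1_sig psi @^-1` (fun t => B t%:E)).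
  by apply: (Acont _ (proj2_sig psi)); apply/nbhs_EFin.
move=> /nbhs_ballP [r r0 Hr].
have [N _ HN] := cv psi A nA.
exists r => //; exists N => n Nn.
rewrite leNgt; apply/negP => h.
apply: (AB _ (HN _ Nn)); apply: Hr.
by rewrite ballEmdist.
Qed.

Lemma final_contra (R : realType) (Y : metricType R) (AY : set (Y -> R))
  (q : {ptws idx AY -> \bar R}) (y : nat -> Y) :
  (forall s : nat -> nat, (forall n, (n <= s n)%N) ->
    forall psi : idx AY, (fun n => (proj1_sig psi (y (s n)))%:E) @ \oo --> q psi) ->
  forall (s : nat -> nat) g, (forall n, (n <= s n)%N) -> AY g ->
   (forall n, g (y (s n.*2.+1)) = 1 /\ g (y (s n.*2)) = 0) -> False.
Proof.
move=> cv s g hs Ag hg.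
pose psi : idx AY := exist _ g Ag.
have c1 : (fun n => (g (y (s n.*2.+1)))%:E) @ \oo --> q psi.
  apply: (cv (fun n => s n.*2.+1) _ psi).
  move=> n; apply: leq_trans (hs _); rewrite -addnn; exact: leq_trans (leq_addr _ _) (leqnSn _).
have c0 : (fun n => (g (y (s n.*2)))%:E) @ \oo --> q psi.
  apply: (cv (fun n => s n.*2) _ psi).
  move=> n; apply: leq_trans (hs _); rewrite -addnn; exact: leq_addr.
have h1 : (1%:E <= q psi)%E.
  apply: (closed_cvg _ (@closed_ereal_le_ereal _ 1%:E) _ _ c1).
  by exists 0%N => // n _ /=; rewrite (hg n).1.
have h0 : (q psi <= 0%:E)%E.
  apply: (closed_cvg _ (@closed_ereal_ge_ereal _ 0%:E) _ _ c0).
  by exists 0%N => // n _ /=; rewrite (hg n).2.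
by have := le_trans h1 h0; rewrite lee_fin ler10.
Qed.



Lemma incr_ge (s : nat -> nat) : (forall n, (s n < s n.+1)%N) -> forall n, (n <= s n)%N.
Proof. move=> hs; elim=> [//|n IH]; exact: leq_ltn_trans IH (hs n). Qed.

Definition infinite_nat (P : nat -> Prop) := forall N, exists n, (N <= n)%N /\ P n.

Section Iseq.
Variables (R : realType) (Y : metricType R) (y : nat -> Y) (C : (nat -> Prop) -> nat -> Y).
Fixpoint Iseq (k : nat) : nat -> Prop :=
  match k with
  | 0 => fun _ => True
  | S k => fun n => Iseq k n /\ mdist (C (Iseq k) k) (y n) < k.+1%:R^-1
  end.
End Iseq.

Lemma caseB (R : realType) (Y : metricType R) (y : nat -> Y) :
  complete_metric Y ->
  (forall c, exists2 r : R, 0 < r & exists N, forall n, (N <= n)%N -> r <= mdist c (y n)) ->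
  exists s : nat -> nat, (forall n, (s n < s n.+1)%N) /\ separated_seq (y \o s).
Proof.
move=> Ycomp Hstar.
case: (pselect (exists eps : R, 0 < eps /\ exists P : nat -> Prop, infinite_nat P /\
   forall c : Y, exists N, forall n, (N <= n)%N -> P n -> eps <= mdist c (y n))).
  move=> [eps [e0 [P [Pinf HP]]]].
  have [Nf HNf] := choice HP.
  have [phi [phiP [phiinc phiB]]] := greedy P Pinf (fun n => Nf (y n)).
  exists phi; split => //; exists eps => // n m nm.
  have key : forall a b, (a < b)%N -> eps <= mdist (y (phi a)) (y (phi b)).
    by move=> a b ab; apply: HNf; [exact: phiB|exact: phiP].
  case: (ltngtP n m) => [nm'|mn'|e]; last by [].
  - exact: key.
  - by rewrite /= metric_sym; apply: key.
move=> Hno.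
have H2 : forall eps : R, 0 < eps -> forall P, infinite_nat P ->
    exists c, infinite_nat (fun n => P n /\ mdist c (y n) < eps).
  move=> eps e0 P Pinf; apply: contrapT => H; apply: Hno.
  exists eps; split => //; exists P; split => // c.
  apply: contrapT => H3; apply: H; exists c => N.
  apply: contrapT => H4; apply: H3; exists N => n Nn Pn.
  rewrite leNgt; apply/negP => h; apply: H4; exists n; split => //.
have H3 : forall P k, exists c, infinite_nat P ->
    infinite_nat (fun n => P n /\ mdist c (y n) < k.+1%:R^-1).
  move=> P k; case: (pselect (infinite_nat P)) => [Pinf|nP].
    have hk : 0 < (k.+1%:R : R)^-1 by rewrite invr_gt0 ltr0n.
    by have [c Hc] := H2 _ hk P Pinf; exists c.
  by exists (y 0%N).
have [C HC] : exists C : (nat -> Prop) -> nat -> Y, forall P k, infinite_nat P ->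
    infinite_nat (fun n => P n /\ mdist (C P k) (y n) < k.+1%:R^-1).
  have H4 : forall P, exists f : nat -> Y, forall k, infinite_nat P ->
      infinite_nat (fun n => P n /\ mdist (f k) (y n) < k.+1%:R^-1).
    by move=> P; have [f hf] := choice (H3 P); exists f.
  have [C HC] := choice H4.
  by exists C.
pose I := @Iseq R Y y C.
have Iinf : forall k, infinite_nat (I k).
  elim=> [|k IH]; first by move=> N; exists N.
  exact: (HC _ k IH).
have Idec : forall k j, (k <= j)%N -> forall n, I j n -> I k n.
  move=> k; elim=> [|j IH].
    by rewrite leqn0 => /eqP -> .
  rewrite leq_eqVlt => /orP[/eqP -> //|]; rewrite ltnS => kj n [Ijn _].
  exact: IH.
have H5 : forall k, exists f : nat -> nat, forall N, (N <= f N)%N /\ I k (f N).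
  by move=> k; have [f hf] := choice (Iinf k); exists f.
have [pk hpk] := choice H5.
pose s := fix f k := match k with 0 => pk 0%N 0%N | S k' => pk k'.+1 (f k').+1 end.
have sI : forall k, I k (s k) by case=> [|k]; exact: (hpk _ _).2.
have sinc : forall k, (s k < s k.+1)%N by move=> k; exact: (hpk _ _).1.
have cex : cauchy_ex ((y \o s) @ \oo).
  move=> eps e0; have [k hk] := @archi_inv _ _ e0.
  exists (C (I k) k); exists k.+1 => // j /= kj.
  have [_ h] := Idec k.+1 j kj _ (sI j).
  by rewrite ballEmdist /=; exact: lt_trans h hk.
have [l hl] : exists l : Y, (y \o s) @ \oo --> l.
  have hc : cauchy_ball ((y \o s) @ \oo).
    apply/cauchy_ballP. exact: (cauchy_exP _ cex).
  exact: (Ycomp (y \o s) hc).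
have [r r0 [N HN]] := Hstar l.
have [M _ HM] := hl _ (nbhsx_ballx _ _ r0).
have := HM (maxn N M) (leq_maxr _ _); rewrite /= ballEmdist /=.
have := HN (s (maxn N M)) (leq_trans (leq_maxl N M) (@incr_ge s sinc _)).
move=> h1 h2; lra.
Qed.



Fixpoint rhoF (R : realType) (m : nat -> R) (k : nat) : R :=
  match k with 0 => m 0%N | S k => Num.min (@rhoF R m k) (m k.+1) end.

Lemma rhoF_pos (R : realType) (m : nat -> R) : (forall j, 0 < m j) -> forall k, 0 < @rhoF R m k.
Proof. move=> hm; elim=> [|k IH] /=; first exact: hm. by rewrite lt_min IH hm. Qed.

Lemma rhoF_le (R : realType) (m : nat -> R) k j : (j <= k)%N -> @rhoF R m k <= m j.
Proof.
elim: k => [|k IH]; first by rewrite leqn0 => /eqP ->.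
rewrite leq_eqVlt => /orP[/eqP ->|]; first by rewrite /= ge_min lexx orbT.
by rewrite ltnS => /IH h /=; rewrite ge_min h.
Qed.

Lemma G_range (R : realType) (G : R -> R) : {homo G : s t / s <= t} ->
  (forall t, t <= 0 -> G t = 0) -> (forall t, 1 <= t -> G t = 1) ->
  forall t, 0 <= G t <= 1.
Proof.
move=> Gm G0 G1 t; apply/andP; split.
  case: (leP t 0) => h; first by rewrite G0.
  by rewrite -(G0 0) // Gm // ltW.
case: (leP 1 t) => h; first by rewrite G1.
by rewrite -(G1 1) // Gm // ltW.
Qed.

Lemma caseA (R : realType) (Y : metricType R) (AY : set (Y -> R)) (y : nat -> Y) :
  subspace_of_C AY -> adequate AY -> (AY = Aloc AY \/ AY = Aloc_b AY) ->
  (forall c, exists2 r : R, 0 < r & exists N, forall n, (N <= n)%N -> r <= mdist c (y n)) ->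
  exists s g, (forall n, (n <= s n)%N) /\ AY g /\
    forall n, g (y (s n.*2.+1)) = 1 /\ g (y (s n.*2)) = 0.
Proof.
move=> [Acont [A0 [Aadd Ascal]]] [[sep _] [[G [_ [Gm [G0 [G1 GA]]]]] _]] Aloc_hyp Hstar.
have H1 : forall c, exists p : R * nat, 0 < p.1 /\ forall n, (p.2 <= n)%N -> p.1 <= mdist c (y n).
  by move=> c; have [r r0 [N HN]] := Hstar c; exists (r, N).
have [rN HrN] := choice H1.
pose r c := (rN c).1. pose Nr c := (rN c).2.
have r0 : forall c, 0 < r c by move=> c; exact: (HrN c).1.
have rN' : forall c n, (Nr c <= n)%N -> r c <= mdist c (y n) by move=> c; exact: (HrN c).2.
have [phi [_ [phiinc phiB]]] := greedy (fun _ => True) (fun N => ex_intro _ N (conj (leqnn N) I))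
   (fun n => Nr (y n)).
have phige := @incr_ge phi phiinc.
pose z k := y (phi k).
have zsep : forall j k, (j < k)%N -> r (z j) <= mdist (z j) (z k).
  by move=> j k jk; apply: rN'; exact: phiB.
pose m j := Num.min (r (z j) / 2) (j.+1%:R^-1).
have m0 : forall j, 0 < m j.
  by move=> j; rewrite lt_min divr_gt0 ?r0 // invr_gt0 ltr0n.
pose rho := @rhoF R m.
have rho0 : forall k, 0 < rho k := @rhoF_pos R m m0.
have rho_r : forall j k, (j <= k)%N -> rho k <= r (z j) / 2.
  by move=> j k jk; apply: le_trans (@rhoF_le R m k j jk) _; rewrite ge_min lexx.
have rho_k : forall k, rho k <= k.+1%:R^-1.
  by move=> k; apply: le_trans (@rhoF_le R m k k (leqnn k)) _; rewrite ge_min lexx orbT.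
pose Bk k := ball (z k) (rho k).
have disj : forall j k w, j <> k -> Bk j w -> Bk k w -> False.
  have key : forall j k w, (j < k)%N -> Bk j w -> Bk k w -> False.
    move=> j k w jk; rewrite /Bk !ballEmdist /= => h1 h2.
    have := zsep j k jk; have := metric_triangle (z j) w (z k).
    rewrite (metric_sym w (z k)).
    have := rho_r j j (leqnn j); have := rho_r j k (ltnW jk).
    lra.
  move=> j k w jk; case: (ltngtP j k) => [h|h|h] //.
  - exact: key.
  - by move=> a b; exact: key b a.
have hf : forall k, exists f : Y -> R, AY f /\ f (z k) = 1 /\
    (forall w, ~ Bk k w -> f w = 0) /\ (forall w, 0 <= f w <= 1).
  move=> k.
  have cl : closed (~` Bk k) by rewrite closedC; exact: mball_open.
  have nx : ~ (~` Bk k) (z k) by move=> /= nb; apply: nb; apply: ballxx.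
  have [f0 [Af0 [f0z f0F]]] := sep (z k) _ cl nx.
  exists (G \o f0); split; first exact: GA.
  split; first by rewrite /= f0z G1.
  split; last by move=> w; exact: G_range.
  by move=> w nw; rewrite /= f0F // G0.
have [f Hf] := choice hf.
pose g w := match pselect (exists k, odd k /\ Bk k w) with
  | left H => f (proj1_sig (cid H)) w | right _ => 0 end.
have gval : forall w k, Bk k w -> g w = if odd k then f k w else 0.
  move=> w k Bw; rewrite /g; case: pselect => [H|H].
    set k0 := proj1_sig (cid H).
    have [ok0 Bk0] : odd k0 /\ Bk k0 w := proj2_sig (cid H).
    have e : k0 = k by apply: contrapT => ne; exact: disj ne Bk0 Bw.
    by rewrite -e ok0.
  by case ok: (odd k) => //; exfalso; apply: H; exists k.
have gout : forall w, (forall k, ~ Bk k w) -> g w = 0.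
  move=> w nB; rewrite /g; case: pselect => [H|//].
  have [_ Bk0] := proj2_sig (cid H); exfalso; exact: nB Bk0.
have gz : forall k, g (z k) = if odd k then 1 else 0.
  move=> k; rewrite (gval _ k); last by apply: ballxx.
  by rewrite (Hf k).2.1.
have grange : forall w, 0 <= g w <= 1.
  move=> w; case: (pselect (exists k, Bk k w)) => [[k Bw]|nB].
    rewrite (gval _ _ Bw); case: odd; [exact: (Hf k).2.2.2 | by rewrite lexx ler01].
  by rewrite gout ?lexx ?ler01 // => k Bw; apply: nB; exists k.
have Asum : forall K, AY (fun u => \sum_(k < K) (if odd k then f k u else 0)).
  elim=> [|K IH].
    have -> : (fun u => \sum_(k < 0) (if odd k then f k u else 0)) = (fun _ => 0).
      by apply: funext => u; rewrite big_ord0.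
    exact: A0.
  have -> : (fun u => \sum_(k < K.+1) (if odd k then f k u else 0)) =
     (fun u => \sum_(k < K) (if odd k then f k u else 0)) \+
     (if odd K then f K else fun _ => 0).
    by apply: funext => u; rewrite big_ord_recr /=; case: odd.
  apply: Aadd => //; case: odd => //; exact: (Hf K).1.
have gloc : Aloc AY g.
  move=> w.
  have d0 : 0 < r w / 2 by rewrite divr_gt0 ?r0.
  have [K HK] := @archi_inv _ _ d0.
  pose K' := maxn K (Nr w).
  have far : forall k u, (K' <= k)%N -> ball w (r w / 2) u -> ~ Bk k u.
    move=> k u Kk; rewrite /Bk !ballEmdist /= => h1 h2.
    have h3 : r w <= mdist w (z k).
      apply: rN'; apply: leq_trans (phige k); exact: leq_trans (leq_maxr _ _) Kk.
    have h4 : rho k <= K.+1%:R^-1.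
      apply: le_trans (rho_k k) _; rewrite lef_pV2 ?posrE ?ltr0n // ler_nat ltnS.
      exact: leq_trans (leq_maxl _ _) Kk.
    have := metric_triangle w u (z k); rewrite (metric_sym u (z k)).
    move=> tri.
    have h5 : mdist (z k) u < r w / 2 := lt_le_trans h2 (le_trans h4 (ltW HK)).
    have := le_lt_trans tri (ltrD h1 h5); rewrite -splitr.
    by rewrite ltNge h3.
  exists (ball w (r w / 2)); split; first exact: nbhsx_ballx.
  exists (fun u => \sum_(k < K') (if odd k then f k u else 0)); split; first exact: Asum.
  move=> u Bu.
  case: (pselect (exists k, Bk k u)) => [[k0 Bk0]|nB].
    have k0K : (k0 < K')%N.
      by rewrite ltnNge; apply/negP => h; exact: far k0 u h Bu Bk0.
    rewrite (gval _ _ Bk0) (bigD1 (Ordinal k0K)) //= big1 ?addr0 // => k /eqP nk.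
    case: odd => //; apply: (Hf k).2.2.1 => Bk'.
    apply: (disj k k0 u) => // e; apply: nk; apply/val_inj; exact: e.
  rewrite gout; last by move=> k Bk'; apply: nB; exists k.
  rewrite big1 // => k _; case: odd => //; apply: (Hf k).2.2.1 => Bk'.
  by apply: nB; exists k.
exists phi, g; split => //; split.
  case: Aloc_hyp => ->; first exact: gloc.
  split; first exact: gloc.
  by exists 1 => w; have /andP[h1 h2] := grange w; rewrite ger0_norm.
move=> n; rewrite -!/(z _) !gz /=.
by rewrite odd_double.
Qed.

Theorem corollary4p3 (R : realType) (X Y : metricType R)
  (AX : set (X -> R)) (AY : set (Y -> R)) :
  subspace_of_C AX -> adequate AX ->
  subspace_of_C AY -> adequate AY ->
  ((AY = Aloc AY \/ AY = Aloc_b AY) \/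
   (complete_metric Y /\
    forall y : nat -> Y, separated_seq y ->
      exists g, AY g /\ forall n : nat,
        g (y n.*2.+1) = 1 /\ g (y n.*2) = 0)) ->
  forall (h : {ptws idx AX -> \bar R} -> {ptws idx AY -> \bar R}),
    homeomorphism_on (compactif AX) (compactif AY) h ->
  forall x0 : X, range (cembed AY) (h (cembed AX x0)).
Proof.
move=> AXsub AXad AYsub AYad hyp h hh x0.
have Kx : compactif AX (cembed AX x0) by apply: subset_closure; exists x0.
have fcX := @FC_X R X AX AXsub AXad.1.1 x0.
have fcY := @FC_homeo _ _ _ _ h _ hh Kx fcX.
have Lq : compactif AY (h (cembed AX x0)) by apply: hh.1.
have [y cv] := @Y_seq R Y AY _ Lq fcY.
apply: contrapT => nq.
have cv0 := cv id (fun n => leqnn n).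
have st := @star R Y AY _ y AYsub.1 nq cv0.
case: hyp => [hA|[Ycomp sepH]].
  have [s [g [hs [Ag hg]]]] := @caseA R Y AY y AYsub AYad hA st.
  exact: (@final_contra R Y AY _ y cv s g hs Ag hg).
have [s [sinc ssep]] := @caseB R Y y Ycomp st.
have [g [Ag hg]] := sepH (y \o s) ssep.
exact: (@final_contra R Y AY _ y cv s g (@incr_ge s sinc) Ag hg).
Qed.
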